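(* Let $\mathcal F$ be a class of functions $\mathcal X\to[0,1]$, let $r^*=r^*(\mathcal G)$ be a localization radius of $\mathcal G=\{(f-g)^2:f,g\in\mathcal F\}$, let $S'\in(\mathcal X\times[0,1])^n$ be arbitrary, let $c\in\mathcal F$, and for $\bar\gamma>0$ let $\mathcal F_c(\bar\gamma)=\{f\in\mathcal F:d_{S'}(f,c)\le\bar\gamma\}$. Then for every $\bar\gamma\ge\sqrt{r^*}$, $$\hat{\mathfrak R}_n(\ell\circ\mathcal F_c(\bar\gamma),S')\le\bar\gamma\sqrt{r^*}+\frac{24}{\sqrt n}\int_0^{\bar\gamma}\sqrt{\log\mathcal N_2(\mathcal F,\rho,S')}\,d\rho.$$
   Context: $\mathcal Z=\mathcal X\times[0,1]$; for $S=\{(x_i,y_i)\}_{i\le n}$, $d_S(f,g)=(\frac1n\sum_i(f(x_i)-g(x_i))^2)^{1/2}$ and $\mathcal N_2(\mathcal F,\rho,S)$ is the minimal size of a $\rho$-cover of $\mathcal F$ in $d_S$. $\ell\circ\mathcal H=\{(x,y)\mapsto(f(x)-y)^2:f\in\mathcal H\}$. For a class $\mathcal G$ of real functions on $\mathcal Z$ and $S=\{z_1,\dots,z_n\}\in\mathcal Z^n$, $\hat{\mathfrak R}_n(\mathcal G,S)=\mathbb E_\sigma\sup_{g\in\mathcal G}\frac1n\sum_{i=1}^n\sigma_ig(z_i)$ with $\sigma_i$ i.i.d. uniform on $\{-1,1\}$; $\mathcal G[r,S]=\{g\in\mathcal G:\frac1n\sum_{i=1}^ng(z_i)\le r\}$.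 A localization radius $r^*(\mathcal G)$ is any number that is at least the largest solution of $\phi_n(r)=r$, for some function $\phi_n:[0,\infty)\to[0,\infty)$ that is nondecreasing, such that $\phi_n(r)/\sqrt r$ is nonincreasing on $(0,\infty)$, and such that $\sup_{S\in\mathcal Z^n}\hat{\mathfrak R}_n(\mathcal G[r,S],S)\le\phi_n(r)$ for all $r>0$. *)

(* Defs.v *)
From Stdlib Require Import Reals Lra Lia List ClassicalEpsilon.
Open Scope R_scope.

Fixpoint rsum (n : nat) (f : nat -> R) : R :=
  match n with O => 0 | S m => rsum m f + f m end.

(* Expectation over i.i.d. uniform Rademacher signs sigma_0..sigma_{n-1} *)
Fixpoint Esign (n : nat) (F : (nat -> R) -> R) : R :=
  match n with
  | O => F (fun _ => 0)
  | S m => (Esign m (fun s => F (fun i => if Nat.eqb i m then 1 else s i))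
          + Esign m (fun s => F (fun i => if Nat.eqb i m then -1 else s i))) / 2
  end.

(* least upper bound of a set of reals (meaningful when it exists) *)
Definition Rsup (E : R -> Prop) : R :=
  epsilon (inhabits 0) (fun m => is_lub E m).

(* samples in Z^n, Z = X x [0,1] *)
Definition sample_ok {X : Type} (n : nat) (S : nat -> X * R) : Prop :=
  forall i, (i < n)%nat -> 0 <= snd (S i) <= 1.

Definition emp_rad {X : Type} (n : nat) (G : (X * R -> R) -> Prop)
  (S : nat -> X * R) : R :=
  Esign n (fun sigma =>
    Rsup (fun v => exists g, G g /\ v = / INR n * rsum n (fun i => sigma i * g (S i)))).

Definition Gloc {X : Type} (n : nat) (G : (X * R -> R) -> Prop) (r : R)
  (S : nat -> X * R) : (X * R -> R) -> Prop :=
  fun g => G g /\ / INR n * rsum n (fun i => g (S i)) <= r.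

Definition is_loc_radius {X : Type} (n : nat) (G : (X * R -> R) -> Prop)
  (rstar : R) : Prop :=
  exists phi : R -> R,
    (forall r, 0 <= r -> 0 <= phi r) /\
    (forall a b, 0 <= a -> a <= b -> phi a <= phi b) /\
    (forall a b, 0 < a -> a <= b -> phi b / sqrt b <= phi a / sqrt a) /\
    (forall r S, 0 < r -> sample_ok n S -> emp_rad n (Gloc n G r S) S <= phi r) /\
    (exists r0, 0 <= r0 /\ phi r0 = r0 /\
       (forall r, 0 <= r -> phi r = r -> r <= r0) /\ r0 <= rstar).

Definition dS {X : Type} (n : nat) (S : nat -> X * R) (f g : X -> R) : R :=
  sqrt (/ INR n * rsum n (fun i => (f (fst (S i)) - g (fst (S i))) ^ 2)).

Definition is_cover {X : Type} (n : nat) (F : (X -> R) -> Prop) (rho : R)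
  (S : nat -> X * R) (C : list (X -> R)) : Prop :=
  (forall c, In c C -> F c) /\
  (forall f, F f -> exists c, In c C /\ dS n S f c <= rho).

Definition is_cov_num {X : Type} (n : nat) (F : (X -> R) -> Prop) (rho : R)
  (S : nat -> X * R) (N : nat) : Prop :=
  (exists C, is_cover n F rho S C /\ length C = N) /\
  (forall C, is_cover n F rho S C -> (N <= length C)%nat).

Definition N2 {X : Type} (n : nat) (F : (X -> R) -> Prop) (rho : R)
  (S : nat -> X * R) : nat :=
  epsilon (inhabits 0%nat) (is_cov_num n F rho S).

Definition improper_int0 (h : R -> R) (b l : R) : Prop :=
  forall eps, 0 < eps -> exists delta, 0 < delta /\
    forall e, 0 < e < delta -> e <= b ->
      exists pr : Riemann_integrable h e b, Rabs (RiemannInt pr - l) < eps.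

Definition loss_class {X : Type} (H : (X -> R) -> Prop) : (X * R -> R) -> Prop :=
  fun g => exists f, H f /\ g = (fun z => (f (fst z) - snd z) ^ 2).

Definition sqdiff_class {X : Type} (F : (X -> R) -> Prop) : (X * R -> R) -> Prop :=
  fun g => exists f1 f2, F f1 /\ F f2 /\ g = (fun z => (f1 (fst z) - f2 (fst z)) ^ 2).

(* Main.v *)
Require Import Defs.
From Stdlib Require Import Reals Lra Lia List ZArith ClassicalEpsilon Classical.
From Coquelicot Require Import Coquelicot.
Open Scope R_scope.

Lemma w_nonneg x : 0 <= x -> 0 <= x*(exp x + exp(-x))/2 - (exp x - exp(-x))/2.
Proof.
  intros Hx. destruct (Req_dec x 0) as [->|Hx0].
  { rewrite Ropp_0, exp_0; lra. }
  set (w := fun t => t*(exp t + exp(-t))/2 - (exp t - exp(-t))/2).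
  destruct (MVT_cor2 w (fun t => t*(exp t - exp(-t))/2) 0 x) as [c [Hc1 Hc2]].
  { lra. }
  { intros c _. apply is_derive_Reals. unfold w. auto_derive; auto. field. }
  unfold w in Hc1. rewrite Ropp_0, exp_0 in Hc1.
  assert (exp (-c) <= exp c) by (destruct (Req_dec c 0) as [->|]; [rewrite Ropp_0; lra| left; apply exp_increasing; lra]).
  assert (0 <= c*(exp c - exp(-c))/2 * (x - 0)).
  { apply Rmult_le_pos; [|lra]. unfold Rdiv. apply Rmult_le_pos; [|lra]. apply Rmult_le_pos; lra. }
  lra.
Qed.

Lemma cosh_le_pos x : 0 <= x -> (exp x + exp (-x))/2 <= exp (x^2/2).
Proof.
  intros Hx. destruct (Req_dec x 0) as [->|Hx0].
  { rewrite Ropp_0, exp_0. replace (0^2/2) with 0 by field. rewrite exp_0; lra. }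
  set (u := fun t => (exp t + exp(-t))/2 * exp(-(t^2/2))).
  destruct (MVT_cor2 u (fun t => - (t*(exp t + exp(-t))/2 - (exp t - exp(-t))/2) * exp(-(t^2/2))) 0 x) as [c [Hc1 Hc2]].
  { lra. }
  { intros c _. apply is_derive_Reals. unfold u. auto_derive; auto. replace (c*(c*1)*/2) with (c^2/2) by field. field. }
  unfold u in Hc1. rewrite Ropp_0, exp_0 in Hc1.
  replace (-(0^2/2)) with 0 in Hc1 by field. rewrite exp_0 in Hc1.
  assert (0 <= (c*(exp c + exp(-c))/2 - (exp c - exp(-c))/2) * exp(-(c^2/2)) * (x-0)).
  { apply Rmult_le_pos; [|lra]. apply Rmult_le_pos; [apply w_nonneg; lra| left; apply exp_pos]. }
  assert (Hu : (exp x + exp (- x)) / 2 * exp (- (x ^ 2 / 2)) <= 1) by lra.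
  assert (E : exp (x^2/2) * exp (-(x^2/2)) = 1) by (rewrite <- exp_plus; replace (x^2/2 + - (x^2/2)) with 0 by ring; apply exp_0).
  assert (P := exp_pos (-(x^2/2))).
  apply Rmult_le_reg_r with (exp (-(x^2/2))); auto. lra.
Qed.

Lemma cosh_le x : (exp x + exp (-x))/2 <= exp (x^2/2).
Proof.
  destruct (Rle_dec 0 x). apply cosh_le_pos; auto.
  replace (x^2) with ((-x)^2) by ring.
  replace (exp x + exp (-x)) with (exp (-x) + exp (- - x)) by (rewrite Ropp_involutive; ring).
  apply cosh_le_pos. lra.
Qed.
Definition signs (n : nat) (s : nat -> R) := forall i, (i < n)%nat -> s i = 1 \/ s i = -1.

Lemma signs_upd m s v : signs m s -> (v = 1 \/ v = -1) ->
  signs (S m) (fun i => if Nat.eqb i m then v else s i).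
Proof.
  intros Hs Hv i Hi. destruct (Nat.eqb_spec i m); auto. apply Hs; lia.
Qed.

Lemma Esign_mono n : forall F G, (forall s, signs n s -> F s <= G s) -> Esign n F <= Esign n G.
Proof.
  induction n as [|m IH]; intros F G H; simpl.
  - apply H. intros i Hi; lia.
  - assert (Esign m (fun s => F (fun i => if Nat.eqb i m then 1 else s i)) <=
            Esign m (fun s => G (fun i => if Nat.eqb i m then 1 else s i))).
    { apply IH. intros s Hs. apply H. apply signs_upd; auto. }
    assert (Esign m (fun s => F (fun i => if Nat.eqb i m then -1 else s i)) <=
            Esign m (fun s => G (fun i => if Nat.eqb i m then -1 else s i))).
    { apply IH. intros s Hs. apply H. apply signs_upd; auto. }
    lra.
Qed.

Lemma Esign_ext n F G : (forall s, signs n s -> F s = G s) -> Esign n F = Esign n G.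
Proof.
  intros H. apply Rle_antisym; apply Esign_mono; intros s Hs; rewrite H; auto; lra.
Qed.

Lemma Esign_const n : forall c, Esign n (fun _ => c) = c.
Proof. induction n as [|m IH]; intros c; simpl; auto. rewrite !IH. lra. Qed.

Lemma Esign_plus n : forall F G, Esign n (fun s => F s + G s) = Esign n F + Esign n G.
Proof.
  induction n as [|m IH]; intros F G; simpl; auto.
  rewrite (IH (fun s => F _) (fun s => G _)). rewrite (IH (fun s => F _) (fun s => G _)). lra.
Qed.

Lemma Esign_scal n : forall c F, Esign n (fun s => c * F s) = c * Esign n F.
Proof.
  induction n as [|m IH]; intros c F; simpl; auto.
  rewrite (IH c (fun s => F _)). rewrite (IH c (fun s => F _)). lra.
Qed.

Lemma Esign_sigma n : forall j, (j < n)%nat -> Esign n (fun s => s j) = 0.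
Proof.
  induction n as [|m IH]; intros j Hj; [lia|]. simpl.
  destruct (Nat.eqb_spec j m).
  - rewrite !Esign_const. lra.
  - rewrite (IH j); [|lia]. lra.
Qed.

Lemma rsum_ext n f g : (forall i, (i < n)%nat -> f i = g i) -> rsum n f = rsum n g.
Proof.
  induction n as [|m IH]; intros H; simpl; auto. rewrite IH, H; auto.
Qed.

Lemma rsum_plus n f g : rsum n (fun i => f i + g i) = rsum n f + rsum n g.
Proof. induction n; simpl; [lra|]. rewrite IHn. lra. Qed.

Lemma rsum_scal n c f : rsum n (fun i => c * f i) = c * rsum n f.
Proof. induction n; simpl; [lra|]. rewrite IHn. lra. Qed.

Lemma rsum_le n f g : (forall i, (i < n)%nat -> f i <= g i) -> rsum n f <= rsum n g.
Proof.
  induction n as [|m IH]; intros H; simpl; [lra|].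
  assert (rsum m f <= rsum m g) by (apply IH; intros; apply H; lia).
  assert (f m <= g m) by (apply H; lia). lra.
Qed.

Lemma rsum_const n c : rsum n (fun _ => c) = INR n * c.
Proof. induction n; simpl rsum; [simpl; lra|]. rewrite IHn, S_INR. lra. Qed.

Lemma Esign_rsum_sigma n : forall m a, (m <= n)%nat ->
  Esign n (fun s => rsum m (fun i => s i * a i)) = 0.
Proof.
  induction m as [|m IH]; intros a Hm; simpl.
  - apply Esign_const.
  - rewrite Esign_plus, IH by lia. rewrite (Esign_ext n _ (fun s => a m * s m)).
    + rewrite Esign_scal, Esign_sigma by lia. lra.
    + intros; lra.
Qed.

Lemma Esign_rsum n K : forall (T : nat -> (nat -> R) -> R),
  Esign n (fun s => rsum K (fun k => T k s)) = rsum K (fun k => Esign n (T k)).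
Proof.
  induction K as [|K IH]; intros T; simpl.
  - apply Esign_const.
  - rewrite Esign_plus, IH. auto.
Qed.

Lemma exp_mid a b : exp ((a + b)/2) <= (exp a + exp b)/2.
Proof.
  set (p := exp (a/2)). set (q := exp (b/2)).
  assert (exp a = p*p) by (unfold p; rewrite <- exp_plus; f_equal; field).
  assert (exp b = q*q) by (unfold q; rewrite <- exp_plus; f_equal; field).
  assert (exp ((a+b)/2) = p*q) by (unfold p, q; rewrite <- exp_plus; f_equal; field).
  rewrite H, H0, H1. assert (0 <= (p-q)*(p-q)) by apply Rle_0_sqr. lra.
Qed.

Lemma Esign_jensen n : forall F, exp (Esign n F) <= Esign n (fun s => exp (F s)).
Proof.
  induction n as [|m IH]; intros F; simpl; [lra|].
  eapply Rle_trans; [apply exp_mid|].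
  pose proof (IH (fun s => F (fun i => if Nat.eqb i m then 1 else s i))).
  pose proof (IH (fun s => F (fun i => if Nat.eqb i m then -1 else s i))).
  simpl in *. lra.
Qed.

Lemma Esign_nonneg n F : (forall s, signs n s -> 0 <= F s) -> 0 <= Esign n F.
Proof. intros H. rewrite <- (Esign_const n 0). apply Esign_mono. auto. Qed.

Lemma Esign_mgf m : forall w, Esign m (fun s => exp (rsum m (fun i => s i * w i)))
   <= exp (rsum m (fun i => (w i)^2) / 2).
Proof.
  induction m as [|m IH]; intros w; cbn [Esign rsum].
  - replace (0/2) with 0 by field. lra.
  - assert (Hu : forall v, Esign m (fun s => exp (rsum m (fun i => (if Nat.eqb i m then v else s i) * w i) + (if Nat.eqb m m then v else s m) * w m))
       = exp (v * w m) * Esign m (fun s => exp (rsum m (fun i => s i * w i)))).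
    { intros v. rewrite <- Esign_scal. apply Esign_ext. intros s _. rewrite <- exp_plus. f_equal.
      rewrite Nat.eqb_refl. rewrite Rplus_comm. f_equal.
      apply rsum_ext. intros i Hi. destruct (Nat.eqb_spec i m); [lia|auto]. }
    rewrite !Hu. replace (1 * w m) with (w m) by ring. replace (-1 * w m) with (- w m) by ring.
    replace ((rsum m (fun i => w i ^ 2) + w m ^ 2) / 2) with (rsum m (fun i => w i ^ 2)/2 + (w m)^2/2) by field.
    rewrite exp_plus.
    pose proof (IH w). pose proof (cosh_le (w m)).
    assert (0 <= Esign m (fun s => exp (rsum m (fun i => s i * w i)))) by (apply Esign_nonneg; intros; left; apply exp_pos).
    replace ((exp (w m) * Esign m (fun s => exp (rsum m (fun i => s i * w i))) +
      exp (- w m) * Esign m (fun s => exp (rsum m (fun i => s i * w i)))) / 2) with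
      ((exp (w m) + exp (- w m))/2 * Esign m (fun s => exp (rsum m (fun i => s i * w i)))) by field.
    rewrite Rmult_comm. apply Rmult_le_compat; auto.
    apply Rlt_le, Rmult_lt_0_compat; [apply Rplus_lt_0_compat; apply exp_pos|lra].
Qed.

Lemma exp_le a b : a <= b -> exp a <= exp b.
Proof. intros [H|H]; [left; apply exp_increasing; auto|subst; lra]. Qed.

Definition mx (l : list R) : R := match l with nil => 0 | a :: l' => fold_right Rmax a l' end.

Lemma fold_max_ge0 b l : b <= fold_right Rmax b l.
Proof. induction l; simpl; [lra|]. eapply Rle_trans; [apply IHl|apply Rmax_r]. Qed.

Lemma fold_max_ge b l a : In a l -> a <= fold_right Rmax b l.
Proof.
  induction l as [|c l IH]; simpl; [tauto|]. intros [->|H]. apply Rmax_l.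
  eapply Rle_trans; [apply IH; auto|apply Rmax_r].
Qed.

Lemma mx_ge l a : In a l -> a <= mx l.
Proof.
  destruct l as [|b l]; simpl; [tauto|]. intros [->|H].
  apply fold_max_ge0. apply fold_max_ge; auto.
Qed.

Definition lsum (l : list R) : R := fold_right Rplus 0 l.

Lemma lsum_cons a l : lsum (a :: l) = a + lsum l.
Proof. reflexivity. Qed.

Lemma exp_mx lam a l : 0 <= lam -> exp (lam * mx (a :: l)) <= lsum (map (fun b => exp (lam * b)) (a :: l)).
Proof.
  intros Hl. simpl. induction l as [|b l IH]; simpl.
  - pose proof (exp_pos (lam*a)). simpl in *. lra.
  - simpl in IH. unfold Rmax at 1. destruct (Rle_dec b (fold_right Rmax a l)).
    + pose proof (exp_pos (lam*b)). lra.
    + assert (0 <= lsum (map (fun b => exp (lam * b)) l)).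
      { clear. induction l; simpl; [lra|]. pose proof (exp_pos (lam*a)); lra. }
      pose proof (exp_pos (lam*a)). lra.
Qed.

Lemma Esign_lsum n (W : list (nat -> R)) (G : (nat -> R) -> (nat -> R) -> R) :
  Esign n (fun s => lsum (map (fun w => G w s) W)) = lsum (map (fun w => Esign n (G w)) W).
Proof.
  induction W as [|w W IH]; simpl. apply Esign_const. rewrite Esign_plus, IH. auto.
Qed.

Lemma opt_lemma x a b : 0 <= a -> 0 <= b -> (forall lam, 0 < lam -> x <= a * lam + b / lam) -> x <= 2 * sqrt (a * b).
Proof.
  intros Ha Hb H.
  destruct (Req_dec a 0) as [Ha0|Ha0].
  { subst a. rewrite Rmult_0_l, sqrt_0. destruct (Rle_dec x 0); [lra|].
    destruct (Req_dec b 0). subst. specialize (H 1 Rlt_0_1). lra.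
    specialize (H (2*b/x)). assert (0 < 2*b/x) by (apply Rdiv_lt_0_compat; lra).
    specialize (H H1). replace (0 * (2*b/x) + b/(2*b/x)) with (x/2) in H by (field; lra). lra. }
  destruct (Req_dec b 0) as [Hb0|Hb0].
  { subst b. rewrite Rmult_0_r, sqrt_0. destruct (Rle_dec x 0); [lra|].
    specialize (H (x/(2*a))). assert (0 < x/(2*a)) by (apply Rdiv_lt_0_compat; lra).
    specialize (H H0). replace (a*(x/(2*a)) + 0/(x/(2*a))) with (x/2) in H by (field; lra). lra. }
  set (s := sqrt (a*b)).
  assert (Hs : 0 < s) by (apply sqrt_lt_R0; apply Rmult_lt_0_compat; lra).
  assert (Hs2 : s * s = a * b) by (apply sqrt_sqrt; apply Rmult_le_pos; lra).
  specialize (H (s/a)). assert (0 < s/a) by (apply Rdiv_lt_0_compat; lra).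
  specialize (H H0). replace (a * (s/a) + b/(s/a)) with (s + a*b/s) in H by (field; lra).
  rewrite <- Hs2 in H. replace (s*s/s) with s in H by (field; lra). lra.
Qed.

Lemma massart n (W : list (nat -> R)) Q : W <> nil -> 0 <= Q ->
  (forall w, In w W -> rsum n (fun i => (w i)^2) <= Q) ->
  Esign n (fun s => mx (map (fun w => rsum n (fun i => s i * w i)) W))
    <= sqrt (2 * Q * ln (INR (length W))).
Proof.
  intros HW HQ HWQ.
  set (E := Esign n (fun s => mx (map (fun w => rsum n (fun i => s i * w i)) W))).
  set (N := INR (length W)).
  assert (HN : 1 <= N).
  { unfold N. destruct W; [congruence|]. simpl length. rewrite S_INR. pose proof (pos_INR (length W)); lra. }
  assert (Hln : 0 <= ln N) by (rewrite <- ln_1; apply ln_le; lra).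
  replace (sqrt (2 * Q * ln N)) with (2 * sqrt (Q/2 * ln N)).
  2:{ replace (2 * Q * ln N) with ((2*2) * (Q/2 * ln N)) by field.
      rewrite (sqrt_mult_alt (2*2) (Q/2*ln N)) by lra. rewrite sqrt_square by lra. auto. }
  apply opt_lemma; [lra|auto|]. intros lam Hlam.
  assert (H1 : exp (lam * E) <= N * exp (lam^2 * Q / 2)).
  { unfold E. rewrite <- Esign_scal. eapply Rle_trans; [apply Esign_jensen|].
    eapply Rle_trans.
    { apply Esign_mono with (G := fun s => lsum (map (fun w => exp (rsum n (fun i => s i * (lam * w i)))) W)).
      intros s _. destruct W as [|w0 W']; [congruence|].
      eapply Rle_trans; [apply (exp_mx lam); lra|].
      simpl map. simpl lsum. apply Req_le. f_equal.
      - f_equal. rewrite <- rsum_scal. apply rsum_ext. intros; ring.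
      - clear. induction W'; simpl; auto. rewrite IHW'. f_equal. f_equal. rewrite <- rsum_scal. apply rsum_ext. intros; ring. }
    rewrite (Esign_lsum n W (fun w s => exp (rsum n (fun i => s i * (lam * w i))))).
    unfold N. assert (Hall : forall w, In w W -> Esign n (fun s => exp (rsum n (fun i => s i * (lam * w i)))) <= exp (lam^2 * Q/2)).
    { intros w Hw. eapply Rle_trans; [apply Esign_mgf|]. apply exp_le.
      rewrite (rsum_ext n _ (fun i => lam^2 * (w i)^2)) by (intros; ring). rewrite rsum_scal.
      pose proof (HWQ w Hw). assert (0 <= lam^2) by (apply pow2_ge_0). 
      apply Rmult_le_compat_r; [lra|]. apply Rmult_le_compat_l; auto. }
    clear -Hall. induction W as [|w W IH]; [simpl; lra|].
    rewrite map_cons, lsum_cons. cbn [length]. rewrite S_INR. assert (Hw := Hall w (or_introl eq_refl)).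
    destruct W as [|w' W'].
    - unfold lsum; cbn [map fold_right length]. change (INR 0) with 0. lra.
    - assert (lsum (map (fun w => Esign n (fun s => exp (rsum n (fun i => s i * (lam * w i))))) (w' :: W')) <= INR (length (w' :: W')) * exp (lam ^ 2 * Q / 2)).
      { apply IH. intros; apply Hall; right; auto. }
      lra. }
  assert (H2 : lam * E <= ln N + lam^2 * Q / 2).
  { rewrite <- (ln_exp (lam*E)). rewrite <- (ln_exp (lam^2*Q/2)). rewrite <- ln_mult by (try apply exp_pos; lra).
    apply ln_le; auto. apply exp_pos. }
  apply Rmult_le_reg_l with lam; auto.
  replace (lam * (Q / 2 * lam + ln N / lam)) with (ln N + lam^2 * Q/2) by (field; lra). auto.
Qed.

Lemma rsum_nonneg n f : (forall i, (i < n)%nat -> 0 <= f i) -> 0 <= rsum n f.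
Proof. intros H. rewrite <- (Rmult_0_r (INR n)), <- rsum_const. apply rsum_le. auto. Qed.

Lemma rsum_sq_nonneg n f : 0 <= rsum n (fun i => (f i)^2).
Proof. apply rsum_nonneg. intros. apply pow2_ge_0. Qed.

Lemma cs n a b : rsum n (fun i => a i * b i) <=
  sqrt (rsum n (fun i => (a i)^2)) * sqrt (rsum n (fun i => (b i)^2)).
Proof.
  pose proof (rsum_sq_nonneg n a). pose proof (rsum_sq_nonneg n b).
  rewrite <- sqrt_mult_alt by auto.
  replace (sqrt (rsum n (fun i => a i ^ 2) * rsum n (fun i => b i ^ 2))) with
    (2 * sqrt (rsum n (fun i => a i ^ 2)/2 * (rsum n (fun i => b i ^ 2)/2))).
  2:{ replace (rsum n (fun i => a i ^ 2) * rsum n (fun i => b i ^ 2)) with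
        ((2*2) * (rsum n (fun i => a i ^ 2)/2 * (rsum n (fun i => b i ^ 2)/2))) by field.
      rewrite (sqrt_mult_alt (2*2)) by lra. rewrite sqrt_square by lra. auto. }
  apply opt_lemma; try lra. intros t Ht.
  replace (rsum n (fun i => a i ^ 2) / 2 * t + rsum n (fun i => b i ^ 2) / 2 / t) with
    (rsum n (fun i => (t/2) * (a i)^2 + (/(2*t)) * (b i)^2)).
  2:{ rewrite rsum_plus, !rsum_scal. field. lra. }
  apply rsum_le. intros i _.
  assert (0 <= (t * a i - b i)^2 / (2*t)).
  { apply Rmult_le_pos; [apply pow2_ge_0|]. left. apply Rinv_0_lt_compat. lra. }
  replace ((t/2) * (a i)^2 + (/(2*t)) * (b i)^2) with (a i * b i + (t * a i - b i)^2 / (2*t)) by (field; lra).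
  lra.
Qed.

Lemma tri_sqrt n a b : sqrt (rsum n (fun i => (a i + b i)^2)) <=
  sqrt (rsum n (fun i => (a i)^2)) + sqrt (rsum n (fun i => (b i)^2)).
Proof.
  pose proof (rsum_sq_nonneg n a). pose proof (rsum_sq_nonneg n b).
  set (A := rsum n (fun i => a i ^ 2)) in *. set (B := rsum n (fun i => b i ^ 2)) in *.
  pose proof (sqrt_pos A). pose proof (sqrt_pos B).
  rewrite <- (sqrt_square (sqrt A + sqrt B)) by lra. apply sqrt_le_1.
  apply rsum_sq_nonneg. apply Rmult_le_pos; lra.
  replace (rsum n (fun i => (a i + b i)^2)) with (A + B + 2 * rsum n (fun i => a i * b i)).
  2:{ unfold A, B. rewrite <- rsum_scal, <- !rsum_plus. apply rsum_ext. intros; ring. }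
  pose proof (cs n a b). fold A B in H3.
  replace ((sqrt A + sqrt B) * (sqrt A + sqrt B)) with (sqrt A * sqrt A + sqrt B * sqrt B + 2 * (sqrt A * sqrt B)) by ring.
  rewrite !sqrt_sqrt by auto. lra.
Qed.

Lemma dS_sym {X} n (S : nat -> X * R) f g : dS n S f g = dS n S g f.
Proof. unfold dS. f_equal. f_equal. apply rsum_ext. intros; ring. Qed.

Lemma dS_nonneg {X} n (S : nat -> X * R) f g : 0 <= dS n S f g.
Proof. apply sqrt_pos. Qed.

Lemma dS_tri {X} n (S : nat -> X * R) f g h : (0 < n)%nat -> dS n S f h <= dS n S f g + dS n S g h.
Proof.
  intros Hn. unfold dS. assert (0 < / INR n) by (apply Rinv_0_lt_compat, lt_0_INR; auto).
  rewrite !sqrt_mult_alt by lra. rewrite <- Rmult_plus_distr_l.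
  apply Rmult_le_compat_l; [apply sqrt_pos|].
  rewrite (rsum_ext n (fun i => _ ^ 2) (fun i => ((f (fst (S i)) - g (fst (S i))) + (g (fst (S i)) - h (fst (S i))))^2)) by (intros; ring).
  apply (tri_sqrt n (fun i => f (fst (S i)) - g (fst (S i))) (fun i => g (fst (S i)) - h (fst (S i)))).
Qed.

Lemma dS_sq {X} n (S : nat -> X * R) f g r : (0 < n)%nat -> dS n S f g <= r ->
  rsum n (fun i => (f (fst (S i)) - g (fst (S i)))^2) <= INR n * r^2.
Proof.
  intros Hn H. unfold dS in H. assert (0 < INR n) by (apply lt_0_INR; auto).
  set (Q := rsum n _) in *. assert (0 <= Q) by (apply (rsum_sq_nonneg n (fun i => f (fst (S i)) - g (fst (S i))))).
  assert (0 <= / INR n * Q) by (apply Rmult_le_pos; [left; apply Rinv_0_lt_compat|]; lra).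
  pose proof (sqrt_pos (/ INR n * Q)).
  assert (/ INR n * Q <= r^2).
  { rewrite <- (sqrt_sqrt (/ INR n * Q)) by auto. simpl. rewrite Rmult_1_r. apply Rmult_le_compat; lra. }
  apply Rmult_le_reg_l with (/ INR n). apply Rinv_0_lt_compat; lra.
  rewrite <- Rmult_assoc, Rinv_l, Rmult_1_l by lra. auto.
Qed.

Fixpoint allL (m M : nat) : list (list nat) :=
  match m with
  | O => nil :: nil
  | S m' => flat_map (fun j => map (cons j) (allL m' M)) (seq 0 (S M))
  end.

Lemma in_allL M l : (forall j, In j l -> (j <= M)%nat) -> In l (allL (length l) M).
Proof.
  induction l as [|j l IH]; intros H; [simpl; auto|]. cbn [length allL].
  apply in_flat_map. exists j. split.
  - apply in_seq. assert (j <= M)%nat by (apply H; left; auto). lia.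
  - apply in_map. apply IH. intros; apply H; right; auto.
Qed.

Lemma map_seq_eq (f g : nat -> nat) m : forall a, map f (seq a m) = map g (seq a m) ->
  forall i, (a <= i < a + m)%nat -> f i = g i.
Proof.
  induction m as [|m IH]; intros a H i Hi; [lia|]. simpl in H. injection H as H1 H2.
  destruct (Nat.eq_dec i a); [subst; auto|]. apply (IH (S a)); auto; lia.
Qed.

Lemma up_pos r : 0 <= r -> (0 < up r)%Z.
Proof. intros H. destruct (archimed r). apply lt_IZR. simpl. lra. Qed.

Lemma up_eq a b : up a = up b -> Rabs (a - b) < 1.
Proof.
  intros H. destruct (archimed a), (archimed b). rewrite H in *. apply Rabs_def1; lra.
Qed.

Lemma up_le a b : a <= b -> (up a <= up b)%Z.
Proof.
  intros H. destruct (archimed a), (archimed b).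
  assert (up a < up b + 1)%Z by (apply lt_IZR; rewrite plus_IZR; simpl; lra). lia.
Qed.

Lemma cover_exists {X} n (F : (X -> R) -> Prop) (S : nat -> X * R) rho c :
  0 < rho -> (0 < n)%nat -> F c -> (forall f, F f -> forall x, 0 <= f x <= 1) ->
  exists C, is_cover n F rho S C.
Proof.
  intros Hr Hn Hc HF.
  set (key := fun (f : X -> R) i => Z.to_nat (up (f (fst (S i)) / rho))).
  set (kl := fun f => map (key f) (seq 0 n)).
  set (M := Z.to_nat (up (1 / rho))).
  set (rep := fun l => epsilon (inhabits c) (fun g => F g /\ (kl g = l \/ ~ (exists f, F f /\ kl f = l)))).
  assert (Hrep : forall l, F (rep l) /\ (kl (rep l) = l \/ ~ (exists f, F f /\ kl f = l))).
  { intros l. unfold rep. apply epsilon_spec.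
    destruct (classic (exists f, F f /\ kl f = l)) as [[f [Hf1 Hf2]]|Hno].
    - exists f; auto.
    - exists c; auto. }
  exists (map rep (allL n M)). split.
  - intros g Hg. apply in_map_iff in Hg. destruct Hg as [l [<- _]]. apply Hrep.
  - intros f Hf. exists (rep (kl f)). split.
    + apply in_map. replace n with (length (kl f)) at 1 by (unfold kl; rewrite length_map, length_seq; auto).
      apply in_allL. intros j Hj. unfold kl in Hj. apply in_map_iff in Hj. destruct Hj as [i [<- _]].
      unfold key, M. pose proof (HF f Hf (fst (S i))).
      assert (0 < / rho) by (apply Rinv_0_lt_compat; auto).
      apply Z2Nat.inj_le.
      * apply Z.lt_le_incl, up_pos. unfold Rdiv. apply Rmult_le_pos; lra.
      * apply Z.lt_le_incl, up_pos. unfold Rdiv. apply Rmult_le_pos; lra.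
      * apply up_le. unfold Rdiv. apply Rmult_le_compat_r; lra.
    + destruct (Hrep (kl f)) as [Hg [Heq|Hno]]; [|exfalso; apply Hno; eauto].
      set (g := rep (kl f)) in *.
      assert (Hk : forall i, (i < n)%nat -> Rabs (f (fst (S i)) - g (fst (S i))) < rho).
      { intros i Hi. assert (key f i = key g i).
        { apply (map_seq_eq _ _ n 0); [unfold kl in Heq; auto| lia]. }
        unfold key in H. apply Z2Nat.inj in H.
        2,3: apply Z.lt_le_incl, up_pos; unfold Rdiv; apply Rmult_le_pos; [apply HF; auto| left; apply Rinv_0_lt_compat; auto].
        apply up_eq in H. 
        replace (f (fst (S i)) - g (fst (S i))) with (rho * (f (fst (S i)) / rho - g (fst (S i)) / rho)) by (field; lra).
        rewrite Rabs_mult, Rabs_pos_eq by lra.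
        assert (rho * Rabs (f (fst (S i)) / rho - g (fst (S i)) / rho) < rho * 1) by (apply Rmult_lt_compat_l; auto). lra. }
      unfold dS. rewrite <- (sqrt_square rho) by lra. apply sqrt_le_1.
      { apply Rmult_le_pos; [left; apply Rinv_0_lt_compat, lt_0_INR; auto|apply rsum_sq_nonneg]. }
      { apply Rmult_le_pos; lra. }
      assert (0 < INR n) by (apply lt_0_INR; auto).
      apply Rmult_le_reg_l with (INR n); auto. rewrite <- Rmult_assoc, Rinv_r, Rmult_1_l by lra.
      rewrite <- rsum_const. apply rsum_le. intros i Hi. specialize (Hk i Hi).
      apply Rabs_def2 in Hk. nra.
Qed.

Lemma nat_min (P : nat -> Prop) : (exists k, P k) -> exists m, P m /\ forall k, P k -> (m <= k)%nat.
Proof.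
  intros [k Hk]. revert Hk. induction k as [k IH] using (well_founded_induction lt_wf). intros Hk.
  destruct (classic (exists j, (j < k)%nat /\ P j)) as [[j [Hj1 Hj2]]|Hno].
  - apply (IH j); auto.
  - exists k. split; auto. intros j Hj. destruct (le_lt_dec k j); auto. exfalso; eauto.
Qed.

Lemma N2_spec {X} n (F : (X -> R) -> Prop) (S : nat -> X * R) rho c :
  0 < rho -> (0 < n)%nat -> F c -> (forall f, F f -> forall x, 0 <= f x <= 1) ->
  is_cov_num n F rho S (N2 n F rho S).
Proof.
  intros Hr Hn Hc HF. unfold N2. apply epsilon_spec.
  destruct (cover_exists n F S rho c Hr Hn Hc HF) as [C HC].
  destruct (nat_min (fun k => exists C, is_cover n F rho S C /\ length C = k)) as [m [[C' [H1 H2]] H3]].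
  { exists (length C); eauto. }
  exists m. split; [eauto|]. intros C0 HC0. apply H3; eauto.
Qed.

Lemma N2_ge1 {X} n (F : (X -> R) -> Prop) (S : nat -> X * R) rho c :
  0 < rho -> (0 < n)%nat -> F c -> (forall f, F f -> forall x, 0 <= f x <= 1) ->
  (1 <= N2 n F rho S)%nat.
Proof.
  intros Hr Hn Hc HF. destruct (N2_spec n F S rho c Hr Hn Hc HF) as [[C [[_ H1] H2]] _].
  destruct (H1 c Hc) as [g [Hg _]]. rewrite <- H2. destruct C; [inversion Hg|]. simpl; lia.
Qed.

Lemma N2_mono {X} n (F : (X -> R) -> Prop) (S : nat -> X * R) r1 r2 c :
  0 < r1 -> r1 <= r2 -> (0 < n)%nat -> F c -> (forall f, F f -> forall x, 0 <= f x <= 1) ->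
  (N2 n F r2 S <= N2 n F r1 S)%nat.
Proof.
  intros Hr Hle Hn Hc HF. destruct (N2_spec n F S r1 c Hr Hn Hc HF) as [[C [[H0 H1] H2]] _].
  destruct (N2_spec n F S r2 c (Rlt_le_trans _ _ _ Hr Hle) Hn Hc HF) as [_ H3].
  rewrite <- H2. apply H3. split; auto. intros f Hf. destruct (H1 f Hf) as [g [Hg Hd]]. exists g; split; auto; lra.
Qed.

Lemma pow2_pos k : 0 < 2 ^ k.
Proof. apply pow_lt; lra. Qed.

Lemma rho_pos gam k : 0 < gam -> 0 < gam / 2 ^ k.
Proof. intros; apply Rdiv_lt_0_compat; auto; apply pow2_pos. Qed.

Lemma rho_le gam k : 0 < gam -> gam / 2 ^ k <= gam.
Proof.
  intros Hg. unfold Rdiv. rewrite <- (Rmult_1_r gam) at 2. apply Rmult_le_compat_l; [lra|].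
  rewrite <- Rinv_1. apply Rinv_le_contravar; [lra|]. induction k; simpl; lra.
Qed.

Lemma rho_S gam k : gam / 2 ^ (S k) = (gam / 2 ^ k) / 2.
Proof. simpl. field. pose proof (pow2_pos k); lra. Qed.

Lemma RInt_lower (h : R -> R) a b : a <= b -> ex_RInt h a b -> (forall x, a < x < b -> h b <= h x) ->
  (b - a) * h b <= RInt h a b.
Proof.
  intros Hab Hex Hh.
  assert (RInt (fun _ => h b) a b <= RInt h a b).
  { apply RInt_le; auto. apply ex_RInt_const. }
  rewrite RInt_const in H. exact H.
Qed.

Lemma chain_integral (h : R -> R) gam : 0 < gam ->
  (forall e, 0 < e <= gam -> ex_RInt h e gam) ->
  (forall x y, 0 < x <= y -> h y <= h x) -> (forall x, 0 < x -> 0 <= h x) ->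
  forall K, rsum K (fun j => 12 * (gam / 2 ^ (S j)) * h (gam / 2 ^ (S j)))
     <= 24 * RInt h (gam / 2 ^ (S K)) gam.
Proof.
  intros Hg Hex Hmon Hpos K. induction K as [|K IH].
  - simpl rsum. assert (0 <= RInt h (gam / 2 ^ 1) gam); [|lra].
    apply RInt_ge_0. apply rho_le; auto. apply Hex. split; [apply rho_pos|apply rho_le]; auto.
    intros x Hx. apply Hpos. pose proof (rho_pos gam 1 Hg). lra.
  - cbn [rsum]. set (a := gam / 2 ^ (S (S K))). set (b := gam / 2 ^ (S K)).
    assert (Ha : 0 < a) by apply rho_pos, Hg. assert (Hb : a = b / 2) by (unfold a, b; apply rho_S).
    assert (Hbg : b <= gam) by apply rho_le, Hg.
    assert (Hex1 : ex_RInt h a gam) by (apply Hex; lra).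
    assert (Hex2 : ex_RInt h a b) by (apply (ex_RInt_Chasles_1 h a b gam); auto; lra).
    assert (Hex3 : ex_RInt h b gam) by (apply (ex_RInt_Chasles_2 h a b gam); auto; lra).
    rewrite <- (RInt_Chasles h a b gam Hex2 Hex3).
    assert (H1 : (b - a) * h b <= RInt h a b).
    { apply RInt_lower; auto; try lra. intros x Hx. apply Hmon. lra. }
    change (plus (RInt h a b) (RInt h b gam)) with (RInt h a b + RInt h b gam).
    fold b in IH. assert (12*b*h b = 24 * ((b - a) * h b)) by (rewrite Hb; field). lra.
Qed.

Lemma int_le_I (h : R -> R) gam I : 0 < gam -> (forall x, 0 < x -> 0 <= h x) ->
  improper_int0 h gam I ->
  forall e, 0 < e <= gam -> ex_RInt h e gam /\ RInt h e gam <= I.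
Proof.
  intros Hg Hpos HI e He.
  assert (Hex : forall e, 0 < e <= gam -> ex_RInt h e gam).
  { intros e0 He0. destruct (HI 1 Rlt_0_1) as [d [Hd Hd2]].
    set (e' := Rmin (d/2) e0). assert (0 < e' < d) by (unfold e'; split; [apply Rmin_glb_lt; lra| pose proof (Rmin_l (d/2) e0); lra]).
    assert (e' <= e0) by apply Rmin_r.
    destruct (Hd2 e') as [pr _]; [auto|lra|].
    apply (ex_RInt_Chasles_2 h e' e0 gam); [lra|]. apply ex_RInt_Reals_1; auto. }
  split; [apply Hex; auto|].
  destruct (Rle_dec (RInt h e gam) I) as [|Hn]; auto. exfalso.
  set (d := RInt h e gam - I). assert (Hd0 : 0 < d) by (unfold d; lra).
  destruct (HI d Hd0) as [dl [Hdl Hdl2]].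
  set (e' := Rmin (dl/2) e). assert (0 < e' < dl) by (unfold e'; split; [apply Rmin_glb_lt; lra| pose proof (Rmin_l (dl/2) e); lra]).
  assert (e' <= e) by apply Rmin_r.
  destruct (Hdl2 e') as [pr Hpr]; [auto|lra|].
  rewrite <- RInt_Reals in Hpr.
  assert (Hex1 : ex_RInt h e' e) by (apply (ex_RInt_Chasles_1 h e' e gam); [lra| apply Hex; lra]).
  rewrite <- (RInt_Chasles h e' e gam Hex1 (Hex e He)) in Hpr.
  change (plus (RInt h e' e) (RInt h e gam)) with (RInt h e' e + RInt h e gam) in Hpr.
  assert (0 <= RInt h e' e).
  { apply RInt_ge_0; auto. intros x Hx; apply Hpos; lra. }
  apply Rabs_def2 in Hpr. unfold d in *. lra.
Qed.

Definition lossv {X} (Sm : nat -> X * R) (f : X -> R) (i : nat) : R := (f (fst (Sm i)) - snd (Sm i))^2.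

Definition sm {X} n (Sm : nat -> X * R) (s : nat -> R) (v : nat -> R) : R := / INR n * rsum n (fun i => s i * v i).

Definition cov {X} n (F : (X -> R) -> Prop) (Sm : nat -> X * R) (c : X -> R) gam (k : nat) : list (X -> R) :=
  match k with
  | O => c :: nil
  | S _ => epsilon (inhabits nil) (fun C => is_cover n F (gam / 2 ^ k) Sm C /\ length C = N2 n F (gam / 2 ^ k) Sm)
  end.

Definition Wv {X} n (Sm : nat -> X * R) gam (k : nat) (a b : X -> R) : nat -> R :=
  if Rle_dec (dS n Sm a b) (3 * (gam / 2 ^ k)) then (fun i => (lossv Sm a i - lossv Sm b i) / INR n) else (fun _ => 0).

Definition Wl {X} n F (Sm : nat -> X * R) c gam k : list (nat -> R) :=
  map (fun p => Wv n Sm gam k (fst p) (snd p)) (list_prod (cov n F Sm c gam k) (cov n F Sm c gam (pred k))).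

Definition Mk {X} n F (Sm : nat -> X * R) c gam k (s : nat -> R) : R :=
  mx (map (fun w => rsum n (fun i => s i * w i)) (Wl n F Sm c gam k)).

Lemma loss_diff {X} (Sm : nat -> X * R) a b i : (0 <= snd (Sm i) <= 1) ->
  (forall x, 0 <= a x <= 1) -> (forall x, 0 <= b x <= 1) ->
  (lossv Sm a i - lossv Sm b i)^2 <= 4 * (a (fst (Sm i)) - b (fst (Sm i)))^2.
Proof.
  intros Hy Ha Hb. unfold lossv. specialize (Ha (fst (Sm i))). specialize (Hb (fst (Sm i))).
  set (y := snd (Sm i)) in *. set (u := a (fst (Sm i))) in *. set (v := b (fst (Sm i))) in *.
  replace ((u - y)^2 - (v - y)^2) with ((u - v) * (u + v - 2*y)) by ring.
  assert ((u + v - 2*y)^2 <= 4) by nra.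
  replace (((u - v) * (u + v - 2 * y))^2) with ((u-v)^2 * (u + v - 2*y)^2) by ring.
  assert (0 <= (u-v)^2) by apply pow2_ge_0. nra.
Qed.

Lemma loss_sum {X} n (Sm : nat -> X * R) (F : (X -> R) -> Prop) a b :
  sample_ok n Sm -> (forall f, F f -> forall x, 0 <= f x <= 1) -> F a -> F b ->
  rsum n (fun i => (lossv Sm a i - lossv Sm b i)^2) <= 4 * rsum n (fun i => (a (fst (Sm i)) - b (fst (Sm i)))^2).
Proof.
  intros HS HF Ha Hb. rewrite <- rsum_scal. apply rsum_le. intros i Hi. apply loss_diff; auto.
Qed.

Lemma cov_in {X} n F (Sm : nat -> X * R) c gam k g : 0 < gam -> (0 < n)%nat -> F c ->
  (forall f, F f -> forall x, 0 <= f x <= 1) -> In g (cov n F Sm c gam k) -> F g.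
Proof.
  intros Hg Hn Hc HF Hin. destruct k as [|k]; simpl in Hin.
  - destruct Hin as [<-|[]]; auto.
  - assert (H : is_cover n F (gam / 2 ^ S k) Sm (cov n F Sm c gam (S k)) /\ length (cov n F Sm c gam (S k)) = N2 n F (gam / 2 ^ S k) Sm).
    { simpl cov. apply epsilon_spec. destruct (N2_spec n F Sm (gam / 2 ^ S k) c (rho_pos gam _ Hg) Hn Hc HF) as [[C HC] _]. eauto. }
    destruct H as [[H1 _] _]. apply H1. exact Hin.
Qed.

Lemma cov_len {X} n F (Sm : nat -> X * R) c gam k : 0 < gam -> (0 < n)%nat -> F c ->
  (forall f, F f -> forall x, 0 <= f x <= 1) ->
  length (cov n F Sm c gam k) = match k with O => 1%nat | _ => N2 n F (gam / 2 ^ k) Sm end.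
Proof.
  intros Hg Hn Hc HF. destruct k as [|k]; [reflexivity|].
  assert (H : is_cover n F (gam / 2 ^ S k) Sm (cov n F Sm c gam (S k)) /\ length (cov n F Sm c gam (S k)) = N2 n F (gam / 2 ^ S k) Sm).
  { simpl cov. apply epsilon_spec. destruct (N2_spec n F Sm (gam / 2 ^ S k) c (rho_pos gam _ Hg) Hn Hc HF) as [[C HC] _]. eauto. }
  apply H.
Qed.

Lemma cov_close {X} n F (Sm : nat -> X * R) c gam k f : 0 < gam -> (0 < n)%nat -> F c ->
  (forall f, F f -> forall x, 0 <= f x <= 1) -> F f -> dS n Sm f c <= gam ->
  exists g, In g (cov n F Sm c gam k) /\ dS n Sm f g <= gam / 2 ^ k.
Proof.
  intros Hg Hn Hc HF Hf Hfc. destruct k as [|k].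
  - exists c. simpl. split; auto. replace (gam/1) with gam by field. auto.
  - assert (H : is_cover n F (gam / 2 ^ S k) Sm (cov n F Sm c gam (S k)) /\ length (cov n F Sm c gam (S k)) = N2 n F (gam / 2 ^ S k) Sm).
    { simpl cov. apply epsilon_spec. destruct (N2_spec n F Sm (gam / 2 ^ S k) c (rho_pos gam _ Hg) Hn Hc HF) as [[C HC] _]. eauto. }
    destruct H as [[_ H1] _]. apply H1; auto.
Qed.

Lemma sm_diff {X} n (Sm : nat -> X * R) s a b :
  sm n Sm s a - sm n Sm s b = rsum n (fun i => s i * ((a i - b i) / INR n)).
Proof.
  unfold sm. rewrite (rsum_ext n (fun i => s i * ((a i - b i) / INR n))
     (fun i => / INR n * (s i * a i) + (-1) * (/ INR n * (s i * b i)))) by (intros; unfold Rdiv; ring).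
  rewrite rsum_plus, !rsum_scal. ring.
Qed.

Lemma wsq {X} n (Sm : nat -> X * R) (F : (X -> R) -> Prop) a b r : (0 < n)%nat -> sample_ok n Sm ->
  (forall f, F f -> forall x, 0 <= f x <= 1) -> F a -> F b -> dS n Sm a b <= r ->
  rsum n (fun i => ((lossv Sm a i - lossv Sm b i) / INR n)^2) <= 4 * r^2 / INR n.
Proof.
  intros Hn HS HF Ha Hb Hd. assert (0 < INR n) by (apply lt_0_INR; auto).
  rewrite (rsum_ext n _ (fun i => (/ INR n)^2 * (lossv Sm a i - lossv Sm b i)^2)) by (intros; unfold Rdiv; ring).
  rewrite rsum_scal. pose proof (loss_sum n Sm F a b HS HF Ha Hb). pose proof (dS_sq n Sm a b r Hn Hd).
  assert (0 < (/ INR n)^2) by (apply pow_lt, Rinv_0_lt_compat; auto).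
  apply Rle_trans with ((/ INR n)^2 * (4 * (INR n * r^2))).
  { apply Rmult_le_compat_l; lra. }
  right. field. lra.
Qed.

Lemma remainder {X} n (Sm : nat -> X * R) (F : (X -> R) -> Prop) s a b r : (0 < n)%nat -> sample_ok n Sm -> signs n s ->
  (forall f, F f -> forall x, 0 <= f x <= 1) -> F a -> F b -> dS n Sm a b <= r ->
  sm n Sm s (lossv Sm a) - sm n Sm s (lossv Sm b) <= 2 * r.
Proof.
  intros Hn HS Hs HF Ha Hb Hd. assert (0 < INR n) by (apply lt_0_INR; auto).
  assert (Hr : 0 <= r) by (pose proof (dS_nonneg n Sm a b); lra).
  rewrite sm_diff. eapply Rle_trans; [apply cs|].
  assert (H1 : rsum n (fun i => s i ^ 2) <= INR n).
  { rewrite <- (Rmult_1_r (INR n)), <- rsum_const. apply rsum_le. intros i Hi. destruct (Hs i Hi) as [-> | ->]; lra. }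
  pose proof (wsq n Sm F a b r Hn HS HF Ha Hb Hd).
  rewrite <- sqrt_mult_alt by apply rsum_sq_nonneg.
  rewrite <- (sqrt_square (2*r)) by lra. apply sqrt_le_1_alt.
  apply Rle_trans with (INR n * (4 * r^2 / INR n)).
  { apply Rmult_le_compat; auto using rsum_sq_nonneg. }
  right. field. lra.
Qed.

Lemma chain {X} n (F : (X -> R) -> Prop) (Sm : nat -> X * R) c gam s f : 0 < gam -> (0 < n)%nat -> F c ->
  (forall f, F f -> forall x, 0 <= f x <= 1) -> F f -> dS n Sm f c <= gam ->
  forall K, exists g, In g (cov n F Sm c gam K) /\ dS n Sm f g <= gam / 2 ^ K /\
    sm n Sm s (lossv Sm g) <= sm n Sm s (lossv Sm c) + rsum K (fun j => Mk n F Sm c gam (S j) s).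
Proof.
  intros Hg Hn Hc HF Hf Hfc K. induction K as [|K IH].
  - exists c. simpl. split; auto. split; [replace (gam/1) with gam by field; auto|lra].
  - destruct IH as [g [Hg1 [Hg2 Hg3]]].
    destruct (cov_close n F Sm c gam (S K) f Hg Hn Hc HF Hf Hfc) as [g' [Hg'1 Hg'2]].
    exists g'. split; auto. split; auto. cbn [rsum].
    assert (Hd : dS n Sm g' g <= 3 * (gam / 2 ^ S K)).
    { eapply Rle_trans; [apply (dS_tri n Sm g' f g Hn)|]. rewrite dS_sym.
      rewrite rho_S in *. lra. }
    assert (Hin : In (Wv n Sm gam (S K) g' g) (Wl n F Sm c gam (S K))).
    { unfold Wl. apply (in_map (fun p => Wv n Sm gam (S K) (fst p) (snd p)) _ (g', g)).
      apply in_prod; auto. }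
    assert (Hle : rsum n (fun i => s i * Wv n Sm gam (S K) g' g i) <= Mk n F Sm c gam (S K) s).
    { unfold Mk. apply mx_ge. apply (in_map (fun w => rsum n (fun i => s i * w i))). auto. }
    unfold Wv in Hle. destruct (Rle_dec (dS n Sm g' g) (3 * (gam / 2 ^ S K))) as [_|]; [|lra].
    cbv beta in Hle. rewrite <- (sm_diff n Sm s (lossv Sm g') (lossv Sm g)) in Hle. lra.
Qed.

Lemma level_bound {X} n (F : (X -> R) -> Prop) (Sm : nat -> X * R) c gam j :
  0 < gam -> (0 < n)%nat -> F c -> (forall f, F f -> forall x, 0 <= f x <= 1) -> sample_ok n Sm ->
  Esign n (Mk n F Sm c gam (S j)) <=
    12 * (gam / 2 ^ S j) * sqrt (ln (INR (N2 n F (gam / 2 ^ S j) Sm))) / sqrt (INR n).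
Proof.
  intros Hg Hn Hc HF HS.
  set (r := gam / 2 ^ S j). assert (Hr : 0 < r) by apply rho_pos, Hg.
  set (N := N2 n F r Sm).
  assert (HN1 : (1 <= N)%nat) by (apply (N2_ge1 n F Sm r c); auto).
  assert (HINn : 0 < INR n) by (apply lt_0_INR; auto).
  assert (Hlen1 : length (cov n F Sm c gam (S j)) = N) by (rewrite cov_len by auto; reflexivity).
  assert (Hlen0 : (length (cov n F Sm c gam j) <= N)%nat).
  { rewrite cov_len by auto. destruct j as [|j']; auto.
    apply (N2_mono n F Sm r (gam / 2 ^ S j') c); auto. unfold r. rewrite rho_S.
    pose proof (rho_pos gam (S j') Hg). lra. }
  assert (Hlen0' : (1 <= length (cov n F Sm c gam j))%nat).
  { rewrite cov_len by auto. destruct j; [auto|]. apply (N2_ge1 n F Sm _ c); auto. apply rho_pos; auto. }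
  set (W := Wl n F Sm c gam (S j)).
  assert (HlenW : length W = (N * length (cov n F Sm c gam j))%nat).
  { unfold W, Wl. rewrite length_map, length_prod. simpl pred. rewrite Hlen1. auto. }
  assert (HW : W <> nil).
  { intros E. assert (length W = 0%nat) by (rewrite E; auto). rewrite HlenW in H. nia. }
  set (Q := 4 * (3 * r)^2 / INR n).
  assert (HQ : 0 <= Q) by (unfold Q; apply Rmult_le_pos; [apply Rmult_le_pos; [lra|apply pow2_ge_0]|left; apply Rinv_0_lt_compat; auto]).
  assert (HWQ : forall w, In w W -> rsum n (fun i => (w i)^2) <= Q).
  { intros w Hw. unfold W, Wl in Hw. apply in_map_iff in Hw. destruct Hw as [[a b] [<- Hp]].
    apply in_prod_iff in Hp. destruct Hp as [Ha Hb]. simpl fst; simpl snd. simpl pred in Hb.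
    unfold Wv. destruct (Rle_dec (dS n Sm a b) (3 * (gam / 2 ^ S j))).
    - apply (wsq n Sm F a b (3*r) Hn HS HF); [apply (cov_in n F Sm c gam (S j) a)|apply (cov_in n F Sm c gam j b)|]; auto.
    - rewrite (rsum_ext n _ (fun _ => 0)) by (intros; ring). rewrite rsum_const. lra. }
  unfold Mk. fold W. eapply Rle_trans; [apply massart; eauto|].
  assert (HNR : 1 <= INR N) by (apply (le_INR 1); auto).
  set (L := ln (INR N)). assert (HL : 0 <= L) by (unfold L; rewrite <- ln_1; apply ln_le; lra).
  assert (Hln : ln (INR (length W)) <= 2 * L).
  { rewrite HlenW, mult_INR. unfold L. replace (2 * ln (INR N)) with (ln (INR N * INR N)) by (rewrite ln_mult; lra).
    assert (1 <= INR (length (cov n F Sm c gam j))) by (apply (le_INR 1); auto).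
    apply ln_le. nra. apply Rmult_le_compat_l; [lra|]. apply le_INR; auto. }
  set (T := 12 * r * sqrt L / sqrt (INR n)).
  assert (HT : 0 <= T).
  { unfold T. unfold Rdiv. apply Rmult_le_pos; [apply Rmult_le_pos; [lra|apply sqrt_pos]|].
    left; apply Rinv_0_lt_compat, sqrt_lt_R0; auto. }
  fold L. fold T. rewrite <- (sqrt_square T) by auto. apply sqrt_le_1_alt.
  assert (HTT : T * T = 144 * r^2 * L / INR n).
  { assert (sqrt L * sqrt L = L) by (apply sqrt_sqrt; auto).
    assert (sqrt (INR n) * sqrt (INR n) = INR n) by (apply sqrt_sqrt; lra).
    assert (0 < sqrt (INR n)) by (apply sqrt_lt_R0; auto).
    replace (T*T) with (144*r^2*(sqrt L*sqrt L)/(sqrt(INR n)*sqrt(INR n))) by (unfold T; field; lra). rewrite H, H0. auto. }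
  rewrite HTT. unfold Q in *.
  apply Rle_trans with (2 * (4 * (3 * r) ^ 2 / INR n) * (2 * L)).
  { apply Rmult_le_compat_l; lra. }
  right. field. lra.
Qed.

Lemma pow2_ge_INR K : INR K <= 2 ^ K.
Proof. induction K; [simpl; lra|]. rewrite S_INR. cbn [pow]. pose proof (pow2_pos K). assert (1 <= 2 ^ K) by (clear; induction K; simpl; lra). lra. Qed.

Lemma dS_refl {X} n (Sm : nat -> X * R) f : dS n Sm f f = 0.
Proof.
  unfold dS. rewrite (rsum_ext n _ (fun _ => 0)) by (intros; ring). rewrite rsum_const, Rmult_0_r, Rmult_0_r. apply sqrt_0.
Qed.

Theorem lemma6 (X : Type) (n : nat) (F : (X -> R) -> Prop)
  (Hn : (0 < n)%nat)
  (HF : forall f, F f -> forall x, 0 <= f x <= 1)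
  (rstar : R) (Hr : is_loc_radius n (sqdiff_class F) rstar)
  (S' : nat -> X * R) (HS : sample_ok n S')
  (c : X -> R) (Hc : F c)
  (gam : R) (Hgam0 : 0 < gam) (Hgam : sqrt rstar <= gam)
  (I : R)
  (HI : improper_int0 (fun rho => sqrt (ln (INR (N2 n F rho S')))) gam I) :
  emp_rad n (loss_class (fun f => F f /\ dS n S' f c <= gam)) S'
    <= gam * sqrt rstar + 24 / sqrt (INR n) * I.
Proof.
  set (h := fun rho => sqrt (ln (INR (N2 n F rho S')))) in *.
  assert (HINn : 0 < INR n) by (apply lt_0_INR; auto).
  assert (Hsn : 0 < sqrt (INR n)) by (apply sqrt_lt_R0; auto).
  assert (Hpos : forall x, 0 < x -> 0 <= h x) by (intros; apply sqrt_pos).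
  assert (Hmon : forall x y, 0 < x <= y -> h y <= h x).
  { intros x y Hxy. unfold h. apply sqrt_le_1_alt.
    assert (H1 := N2_ge1 n F S' y c ltac:(lra) Hn Hc HF).
    assert (H2 := N2_mono n F S' x y c ltac:(lra) ltac:(lra) Hn Hc HF).
    apply ln_le. apply lt_0_INR; lia. apply le_INR; auto. }
  assert (HII := int_le_I h gam I Hgam0 Hpos HI).
  assert (Hmain : forall K, emp_rad n (loss_class (fun f => F f /\ dS n S' f c <= gam)) S'
             <= 24 / sqrt (INR n) * I + 2 * (gam / 2 ^ K)).
  { intros K. unfold emp_rad.
    eapply Rle_trans.
    { apply Esign_mono with (G := fun s => sm n S' s (lossv S' c) + rsum K (fun j => Mk n F S' c gam (S j) s) + 2 * (gam / 2 ^ K)).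
      intros s Hs.
      set (A := fun v => exists g, loss_class (fun f => F f /\ dS n S' f c <= gam) g /\
                 v = / INR n * rsum n (fun i => s i * g (S' i))).
      set (B := sm n S' s (lossv S' c) + rsum K (fun j => Mk n F S' c gam (S j) s) + 2 * (gam / 2 ^ K)).
      assert (HB : forall v, A v -> v <= B).
      { intros v [g [[f [[Hf Hfc] ->]] ->]].
        destruct (chain n F S' c gam s f Hgam0 Hn Hc HF Hf Hfc K) as [g [Hg1 [Hg2 Hg3]]].
        assert (Fg : F g) by (apply (cov_in n F S' c gam K g Hgam0 Hn Hc HF Hg1)).
        pose proof (remainder n S' F s f g (gam / 2 ^ K) Hn HS Hs HF Hf Fg Hg2).
        change (/ INR n * rsum n (fun i => s i * (f (fst (S' i)) - snd (S' i)) ^ 2)) with (sm n S' s (lossv S' f)).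
        unfold B. lra. }
      assert (Hne : exists v, A v).
      { exists (/ INR n * rsum n (fun i => s i * (c (fst (S' i)) - snd (S' i)) ^ 2)).
        exists (fun z => (c (fst z) - snd z)^2). split; auto. exists c. split; auto. split; auto.
        rewrite dS_refl. lra. }
      assert (Hlub : is_lub A (Rsup A)).
      { unfold Rsup. apply epsilon_spec. destruct (completeness A) as [m Hm]; eauto.
        exists B. intros v Hv. apply HB; auto. }
      destruct Hlub as [_ Hlub]. apply Hlub. intros v Hv. apply HB; auto. }
    rewrite !Esign_plus, Esign_const. unfold sm. rewrite Esign_scal, Esign_rsum_sigma by lia.
    rewrite (Esign_rsum n K (fun j s => Mk n F S' c gam (S j) s)).
    assert (Hsum : rsum K (fun j => Esign n (fun s => Mk n F S' c gam (S j) s)) <= 24 / sqrt (INR n) * I).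
    { eapply Rle_trans.
      { apply rsum_le. intros j _. apply (level_bound n F S' c gam j Hgam0 Hn Hc HF HS). }
      rewrite (rsum_ext K _ (fun j => / sqrt (INR n) * (12 * (gam / 2 ^ S j) * h (gam / 2 ^ S j)))).
      2:{ intros; unfold h, Rdiv; ring. }
      rewrite rsum_scal.
      pose proof (chain_integral h gam Hgam0 (fun e He => proj1 (HII e He)) Hmon Hpos K).
      assert (HRI : RInt h (gam / 2 ^ S K) gam <= I).
      { apply HII. split; [apply rho_pos|apply rho_le]; auto. }
      assert (0 < / sqrt (INR n)) by (apply Rinv_0_lt_compat; auto).
      unfold Rdiv. rewrite (Rmult_comm 24 (/ sqrt (INR n))), Rmult_assoc.
      apply Rmult_le_compat_l; lra. }
    lra. }
  assert (Hlim : emp_rad n (loss_class (fun f => F f /\ dS n S' f c <= gam)) S' <= 24 / sqrt (INR n) * I).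
  { set (E := emp_rad n _ S') in *. set (T := 24 / sqrt (INR n) * I) in *.
    destruct (Rle_dec E T) as [|Hn']; auto. exfalso.
    assert (Hd : 0 < E - T) by lra.
    destruct (archimed (2 * gam / (E - T))) as [Ha _].
    set (K := Z.to_nat (up (2 * gam / (E - T)))).
    assert (HK : 2 * gam / (E - T) < INR K).
    { unfold K. rewrite INR_IZR_INZ, Z2Nat.id. lra.
      apply Z.lt_le_incl, up_pos. unfold Rdiv. apply Rmult_le_pos; [lra|left; apply Rinv_0_lt_compat; lra]. }
    pose proof (pow2_ge_INR K). pose proof (pow2_pos K). pose proof (Hmain K).
    assert (2 * gam < (E - T) * 2 ^ K).
    { apply Rmult_lt_reg_r with (/ (E - T)). apply Rinv_0_lt_compat; lra.
      replace ((E - T) * 2 ^ K * / (E - T)) with (2 ^ K) by (field; lra). unfold Rdiv in HK. lra. }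
    assert (2 * (gam / 2 ^ K) < E - T).
    { apply Rmult_lt_reg_r with (2 ^ K); auto. replace (2 * (gam / 2 ^ K) * 2 ^ K) with (2 * gam) by (field; lra). lra. }
    lra. }
  assert (0 <= gam * sqrt rstar) by (apply Rmult_le_pos; [lra|apply sqrt_pos]).
  lra.
Qed.
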